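(* Fix $T>1$ and constants $A,B>0$. Let $\mathbb{P}_0$ be the law of the set of event times in $[0,T]$ of an inhomogeneous Poisson point process with rate function $\Lambda_0(t)=B$, and let $\mathbb{P}_1$ be the corresponding law for the rate function \[ \Lambda_1(t)=B+Ae^{-(t-1)}\mathbf 1(t\ge 1). \] If $A/\sqrt{B}\to 0$, then no estimator can correctly detect a jump at $t=1$ with probability greater than $1/2+o(1)$; that is, for every test $\psi$ (a measurable function of the observed event times with values in $\{0,1\}$, where $\psi=1$ declares a jump at $t=1$), one has $\tfrac12\big(\mathbb{P}_0(\psi=0)+\mathbb{P}_1(\psi=1)\big)\le \tfrac12+o(1)$.
   Context: An inhomogeneous Poisson point process with (deterministic) rate function $\Lambda\ge 0$ is a point process on $[0,\infty)$ whose number of points in disjoint intervals are independent and whose number of points in an interval $I$ is Poisson with mean $\int_I\Lambda(s)\,ds$. The asymptotics $o(1)$ are as the parameters vary with $A/\sqrt B\to 0$. *)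

(* Defs.v *)
From HB Require Import structures.
From mathcomp Require Import all_boot all_order all_algebra.
From mathcomp Require Import all_classical all_reals all_analysis.
Set Implicit Arguments. Unset Strict Implicit. Unset Printing Implicit Defensive.
Import Order.TTheory GRing.Theory Num.Theory.
Import numFieldNormedType.Exports.
Local Open Scope classical_set_scope.
Local Open Scope ring_scope.

(* Poisson pmf with mean m >= 0 (including the degenerate mean 0, where it is
   the Dirac mass at 0, since 0 ^+ 0 = 1).  We do not use the library's
   [poisson_pmf], which returns 1 for every k when the rate is 0. *)
Definition pois_pmf {R : realType} (m : R) (k : nat) : R :=
  m ^+ k / (k`!)%:R * expR (- m).

(* A point configuration on [0, oo) is encoded by its counting function:
   x t = number of event times in (-oo, t] (so x t = #points in [0,t] for
   t >= 0, and x t = 0 for t < 0). *)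
Definition cyl_sets {R : realType} : set (set (R -> nat)) :=
  [set A | exists (t : R) (k : nat), A = [set x | x t = k]].

Definition config (R : realType) := g_sigma_algebraType (@cyl_sets R).

(* [P] is the law of the set of event times in [0, T] of an inhomogeneous
   Poisson point process with rate [Lam]: no points before 0, and for
   consecutive disjoint intervals (t_0, t_1], ..., (t_{n-1}, t_n] the numbers
   of event times in [0,T] lying in them are independent Poisson variables with
   means int_{(t_i, t_{i+1}] cap [0,T]} Lam. *)
Definition PPP_law {R : realType} (T : R) (Lam : R -> R)
    (P : probability (config R) R) : Prop :=
  (forall t : R, t < 0 -> P [set x : config R | x t = 0%N] = 1%E) /\
  (forall (n : nat) (t : nat -> R) (k : nat -> nat),
     (forall i, (i < n)%N -> t i < t i.+1) ->
     P [set x : config R | forall i, (i < n)%N -> x (t i.+1) = (x (t i) + k i)%N]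
     = (\prod_(i < n)
          pois_pmf (Rintegral lebesgue_measure
                      (`]t i, t i.+1] `&` `[0, T]) Lam) (k i))%:E).

Definition rate0 {R : realType} (B : R) : R -> R := fun _ => B.
Definition rate1 {R : realType} (A B : R) : R -> R :=
  fun t => B + (if 1 <= t then A * expR (- (t - 1)) else 0).

(* Main.v *)
Require Import Defs.
From HB Require Import structures.
From mathcomp Require Import all_boot all_order all_algebra.
From mathcomp Require Import all_classical all_reals all_analysis.
From mathcomp Require Import ring lra.
Import Order.TTheory GRing.Theory Num.Theory.
Import numFieldNormedType.Exports.
Local Open Scope classical_set_scope.
Local Open Scope ring_scope.
Set Implicit Arguments. Unset Strict Implicit. Unset Printing Implicit Defensive.


Section P.
Variable R : realType.
Lemma exp_partial_cvg (x : R) : series (exp_coeff x) @ \oo --> expR x.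
Proof. exact: (is_cvg_series_exp_coeff x). Qed.
Lemma exp_partial_le (x : R) K : 0 <= x -> series (exp_coeff x) K <= expR x.
Proof.
move=> x0; apply: nondecreasing_cvgn_le; last exact: is_cvg_series_exp_coeff.
apply/nondecreasing_seqP => n; rewrite /series /= big_nat_recr //= lerDl.
exact: exp_coeff_ge0.
Qed.

Lemma pois_ge0 (m : R) k : 0 <= m -> 0 <= pois_pmf m k.
Proof. by move=> m0; rewrite /pois_pmf mulr_ge0 ?expR_ge0 // divr_ge0 // exprn_ge0. Qed.

Lemma pois_sum (m : R) K : \sum_(j < K) pois_pmf m j = series (exp_coeff m) K * expR (- m).
Proof.
rewrite /series /= big_mkord big_distrl /=; apply: eq_bigr => j _.
by rewrite /pois_pmf /exp_coeff /=.
Qed.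

Lemma pois_sum_le1 (m : R) K : 0 <= m -> \sum_(j < K) pois_pmf m j <= 1.
Proof.
move=> m0; rewrite pois_sum -(expRxMexpNx_1 m) ler_wpM2r ?expR_ge0 //.
exact: exp_partial_le.
Qed.

Lemma pois_tail (m : R) : 0 <= m -> forall eta : R, 0 < eta ->
  exists K0 : nat, forall K, (K0 <= K)%N -> 1 - \sum_(j < K) pois_pmf m j <= eta.
Proof.
move=> m0 eta eta0.
have H : (fun K => \sum_(j < K) pois_pmf m j) @ \oo --> (1 : R).
  rewrite -(expRxMexpNx_1 m).
  under eq_fun do rewrite pois_sum.
  apply: cvgMl; exact: exp_partial_cvg.
move/cvgrPdist_lt: H => /(_ eta eta0) [K0 _ HK].
exists K0 => K KK; have := HK K KK.
by move=> /ltW; apply: le_trans; rewrite ler_norm.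
Qed.

Lemma pois0 j : pois_pmf (0 : R) j = (j == 0)%:R.
Proof.
by rewrite /pois_pmf oppr0 expR0 mulr1; case: j => [|j]; rewrite ?expr0 ?fact0 ?divr1 // expr0n mul0r.
Qed.

Lemma chi_sum (a b : R) K : 0 <= a -> 0 <= b -> (b = 0 -> a = 0) ->
  \sum_(j < K) pois_pmf a j ^+ 2 / pois_pmf b j <= expR ((a - b) ^+ 2 / b).
Proof.
move=> a0 b0 ba; have [b00|bpos] := eqVneq b 0.
  rewrite b00 (ba b00) subrr expr0n /= mul0r expR0.
  case: K => [|K]; first by rewrite big_ord0.
  rewrite big_ord_recl big1 ?addr0; last by move=> i _; rewrite /bump /= !pois0 /= expr0n mul0r.
  by rewrite pois0 /= expr1n invr1 mulr1.
have bp : 0 < b by rewrite lt_def bpos b0.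
apply: (@le_trans _ _ (series (exp_coeff (a ^+ 2 / b)) K * expR (b - 2 * a))).
  rewrite /series /= big_mkord big_distrl /=; apply: ler_sum => j _.
  rewrite /pois_pmf /exp_coeff /= [(a ^+ 2 / b) ^+ j]exprMn exprVn -!exprM mulnC !exprM.
  rewrite expRD !expRN (_ : 2 * a = a + a) ?expRD; last by ring.
  have h1 : (j`!%:R : R) != 0 by rewrite pnatr_eq0 -lt0n fact_gt0.
  have h2 : b ^+ j != 0 by rewrite expf_neq0.
  have h3 : expR b != 0 by rewrite gt_eqF ?expR_gt0.
  have h4 : expR a != 0 by rewrite gt_eqF ?expR_gt0.
  rewrite le_eqVlt; apply/orP; left; apply/eqP; field.
  by rewrite h1 h2 h3 h4.
rewrite (_ : (a - b) ^+ 2 / b = a ^+ 2 / b + (b - 2 * a)); last first.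
  by field.
rewrite [expR (_ ^+ 2 / b + _)]expRD ler_pM2r ?expR_gt0 // exp_partial_le // divr_ge0 ?sqr_ge0 // ltW.
Qed.
End P.

Section P.
Variable R : realType.

Lemma amgm_term (p0 p1 c : R) : 0 <= p0 -> 0 <= p1 -> (p0 = 0 -> p1 = 0) -> 0 < c ->
  `|p1 - p0| <= (p1 ^+ 2 / p0 - 2 * p1 + p0) / (2 * c) + c * p0 / 2.
Proof.
move=> h0 h1 h01 c0; have [e|p0n] := eqVneq p0 0.
  rewrite (h01 e) e subrr normr0 expr0n /= !mul0r mulr0 !addr0 ?oppr0 ?mul0r ?mulr0 ?addr0 ?mul0r //.
have p0p : 0 < p0 by rewrite lt_def p0n h0.
rewrite (_ : p1 ^+ 2 / p0 - 2 * p1 + p0 = (p1 - p0) ^+ 2 / p0); last by field.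
set d := p1 - p0.
have key : 2 * c * p0 * `|d| <= d ^+ 2 + (c * p0) ^+ 2.
  have := sqr_ge0 (`|d| - c * p0); rewrite sqrrB real_normK ?num_real //.
  move=> H; nra.
rewrite -(@ler_pM2l _ (2 * c * p0)); last by rewrite !mulr_gt0.
apply: (le_trans key) => {key}; rewrite le_eqVlt; apply/orP; left; apply/eqP.
field; rewrite ?gt_eqF //.
Qed.

Lemma one_sub_prod n (x : 'I_n -> R) : (forall i, 0 <= x i <= 1) ->
  1 - \prod_(i < n) x i <= \sum_(i < n) (1 - x i).
Proof.
elim: n x => [|n IH] x hx; first by rewrite !big_ord0 subrr.
rewrite big_ord_recl [X in _ <= X]big_ord_recl.
set P := \prod_(i < n) x (lift ord0 i).
have hP : 0 <= P <= 1.
  by apply/andP; split; [apply: prodr_ge0 => i _; case/andP: (hx (lift ord0 i))|apply: prodr_ile1 => i _; exact: hx].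
have := IH (fun i => x (lift ord0 i)) (fun i => hx _).
rewrite -/P => H; have := hx ord0; move: hP => /andP [hP1 hP2] /andP [h1 h2].
have : 1 - x ord0 * P <= (1 - x ord0) + (1 - P) by nra.
move=> H2; apply: (le_trans H2); rewrite lerD2l; exact: H.
Qed.

Definition pj n (m : 'I_n -> R) K (kf : {ffun 'I_n -> 'I_K}) : R :=
  \prod_(i < n) pois_pmf (m i) (kf i).

Lemma box_sum n (m : 'I_n -> R) K :
  \sum_(kf : {ffun 'I_n -> 'I_K}) pj m kf = \prod_(i < n) \sum_(j < K) pois_pmf (m i) j.
Proof. by rewrite bigA_distr_bigA. Qed.

Lemma main_fin n K (a b : 'I_n -> R) (c : R) :
  (forall i, 0 <= a i) -> (forall i, 0 <= b i) -> (forall i, b i = 0 -> a i = 0) -> 0 < c ->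
  \sum_(kf : {ffun 'I_n -> 'I_K}) `|pj a kf - pj b kf| <=
   (expR (\sum_(i < n) (a i - b i) ^+ 2 / b i)
      - 2 * \prod_(i < n) \sum_(j < K) pois_pmf (a i) j + 1) / (2 * c) + c / 2.
Proof.
move=> a0 b0 ba c0.
have pb0 (kf : {ffun 'I_n -> 'I_K}) : 0 <= pj b kf by apply: prodr_ge0 => i _; apply: pois_ge0.
have pa0 (kf : {ffun 'I_n -> 'I_K}) : 0 <= pj a kf by apply: prodr_ge0 => i _; apply: pois_ge0.
have pba (kf : {ffun 'I_n -> 'I_K}) : pj b kf = 0 -> pj a kf = 0.
  move/eqP/prodf_eq0 => [i _ /eqP hi]; apply/eqP/prodf_eq0; exists i => //.
  move: hi; have [e|bi0] := eqVneq (b i) 0.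
    by rewrite e (ba _ e) => ->.
  move=> hi; exfalso; move: hi; apply/eqP.
  rewrite /pois_pmf !mulf_neq0 // ?gt_eqF ?expR_gt0 ?invr_neq0 ?expf_neq0 //.
  by rewrite exprn_gt0 // lt_def bi0 b0.
apply: le_trans.
  apply: ler_sum => kf _; exact: (amgm_term (pb0 kf) (pa0 kf) (@pba kf) c0).
rewrite big_split /= -!big_distrl /= -big_distrr /= !big_split /= sumrN -big_distrr /=.
have sb : \sum_(kf : {ffun 'I_n -> 'I_K}) pj b kf <= 1.
  rewrite box_sum; apply: prodr_ile1 => i _; apply/andP; split.
    by apply: sumr_ge0 => j _; apply: pois_ge0.
  exact: pois_sum_le1.
have sq : \sum_(kf : {ffun 'I_n -> 'I_K}) pj a kf ^+ 2 / pj b kf <=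
          expR (\sum_(i < n) (a i - b i) ^+ 2 / b i).
  rewrite (eq_bigr (fun kf : {ffun 'I_n -> 'I_K} => \prod_(i < n) (pois_pmf (a i) (kf i) ^+ 2 / pois_pmf (b i) (kf i)))); last first.
    by move=> kf _; rewrite /pj -prodrXl -prodfV -big_split.
  rewrite -(bigA_distr_bigA (fun (i : 'I_n) (j : 'I_K) => pois_pmf (a i) j ^+ 2 / pois_pmf (b i) j)) expR_sum; apply: ler_prod => i _; apply/andP; split.
    by apply: sumr_ge0 => j _; rewrite divr_ge0 ?exprn_ge0 ?pois_ge0.
  exact: chi_sum (a0 i) (b0 i) (ba i).
have sa := box_sum a K; rewrite /= in sa.
rewrite sa.
apply: lerD; last first.
  apply: ler_wpM2r; first by rewrite invr_ge0.
  by rewrite -[leRHS]mulr1 ler_wpM2l // ltW.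
rewrite ler_pM2r; last by rewrite invr_gt0 mulr_gt0.
by apply: lerD; [apply: lerD => //| ].
Qed.
End P.

Section Approx.
Local Open Scope ereal_scope.
Context d (T : measurableType d) (R : realType).
Variables (G : set (set T)) (mu : {measure set T -> \bar R}).
Hypotheses (mG : @measurable _ T = <<s G >>) (GM : forall A, G A -> measurable A)
  (GT : G setT) (GC : forall A, G A -> G (~` A))
  (GU : forall A B, G A -> G B -> G (A `|` B)) (mufin : mu setT < +oo).

Definition symd (A B : set T) := (A `\` B) `|` (B `\` A).

Lemma symd_meas A B : measurable A -> measurable B -> measurable (symd A B).
Proof. by move=> mA mB; apply: measurableU; apply: measurableD. Qed.

Lemma G0 : G set0.
Proof. by rewrite -setCT; apply: GC. Qed.

Lemma GI : setI_closed G.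
Proof.
move=> A B GA GB; rewrite -[A]setCK -[B]setCK -setCU; apply: GC; apply: GU; exact: GC.
Qed.

Lemma Gbig (N : nat) (g : nat -> set T) : (forall k, G (g k)) ->
  G (\big[setU/set0]_(k < N) g k).
Proof.
move=> Gg; elim: N => [|N IH]; first by rewrite big_ord0; exact: G0.
by rewrite big_ord_recr /=; apply: GU.
Qed.

Definition approxP (S : set T) := forall e : R, (0 < e)%R ->
  exists S0, G S0 /\ mu (symd S S0) <= e%:E.

Lemma approx_all S : measurable S -> approxP S.
Proof.
move=> mS; have sG : <<s G >> S by rewrite -mG.
apply: (dynkin_induction mG GI) => //.
- move=> e e0; exists setT; split => //.
  by rewrite /symd !setDv setU0 measure0 lee_fin ltW.
- move=> A GA e e0; exists A; split => //.
  by rewrite /symd !setDv setU0 measure0 lee_fin ltW.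
- move=> A mA PA e e0; have [S0 [GS0 hS0]] := PA e e0.
  exists (~` S0); split; first exact: GC.
  rewrite /symd !setDE !setCK setUC (setIC (~` A)) (setIC (~` S0)).
  by rewrite /symd !setDE in hS0.
- move=> F mF tF PF e e0.
  set S1 := \bigcup_k F k.
  have mS1 : measurable S1 by apply: bigcup_measurable => k _; exact: mF.
  pose U N := \big[setU/set0]_(k < N) F k.
  have mU N : measurable (U N) by apply: bigsetU_measurable => k _; exact: mF.
  pose V N := S1 `\` U N.
  have mV N : measurable (V N) by apply: measurableD.
  have Vni : nonincreasing_seq V.
    apply/nonincreasing_seqP => N. apply/subsetPset; apply: setDS.
    by rewrite /U big_ord_recr /=; apply: subsetUl.
  have V0 : \bigcap_N V N = set0.
    apply/seteqP; split => // x Vx; have [m _ Fmx] := (Vx 0%N I).1.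
    have := (Vx m.+1 I).2; apply; rewrite /U -bigcup_mkord.
    by exists m => //=.
  have V0fin : mu (V 0%N) < +oo.
    apply: le_lt_trans mufin; apply: le_measure; rewrite ?inE //; exact: mV.
  have mcap : measurable (\bigcap_N V N) by rewrite V0.
  have cV := nonincreasing_cvg_mu V0fin mV mcap Vni.
  rewrite V0 measure0 in cV.
  have e20 : (0 < e / 2)%R by rewrite divr_gt0.
  have e2E : 0 < (e/2)%:E by rewrite lte_fin.
  have [N _ HN] := cV _ (open_ereal_lt' e2E).
  have hVN : mu (V N) <= (e/2)%:E by apply/ltW; exact: (HN N (leqnn N)).
  have eN0 : (0 < e / (2 * N.+1%:R))%R by rewrite divr_gt0 // mulr_gt0.
  have /choice [g hg] : forall n, exists S0, G S0 /\ mu (symd (F n) S0) <= (e / (2 * N.+1%:R))%:E.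
    by move=> n; exact: PF.
  exists (\big[setU/set0]_(k < N) g k); split; first by apply: Gbig => k; case: (hg k).
  set W := \big[setU/set0]_(k < N) symd (F k) (g k).
  have mg k : measurable (g k) by apply: GM; case: (hg k).
  have mW : measurable W by apply: bigsetU_measurable => k _; apply: symd_meas.
  have sub : symd S1 (\big[setU/set0]_(k < N) g k) `<=` V N `|` W.
    move=> x [[S1x ngx]|[gx nS1x]].
    - have [UNx|nUNx] := pselect (U N x); last by left.
      right; move: UNx; rewrite /U -bigcup_mkord => -[k /= kN Fkx].
      rewrite /W -(bigcup_mkord _ (fun k => symd (F k) (g k))); exists k => //; left; split => //.
      by move=> gkx; apply: ngx; rewrite -bigcup_mkord; exists k.
    - right; move: gx; rewrite -bigcup_mkord => -[k /= kN gkx].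
      rewrite /W -(bigcup_mkord _ (fun k => symd (F k) (g k))); exists k => //; right; split => //.
      by move=> Fkx; apply: nS1x; exists k.
  have msd : measurable (symd S1 (\big[setU/set0]_(k < N) g k)).
    by apply: symd_meas => //; apply: bigsetU_measurable => k _.
  apply: (le_trans (le_measure _ _ _ sub)); rewrite ?inE //; first exact: measurableU.
  apply: (le_trans (measureU2 _ (mV N) mW)).
  have hW : mu W <= \sum_(k < N) mu (symd (F k) (g k)).
    apply: (@content_subadditive _ _ _ mu W (fun k => symd (F k) (g k)) N) => //.
    by move=> k _; apply: symd_meas.
  have hW2 : \sum_(k < N) mu (symd (F k) (g k)) <= (N%:R * (e / (2 * N.+1%:R)))%:E.
    apply: le_trans.
      by apply: lee_sum => k _; exact: (hg k).2.
    rewrite sumEFin sumr_const card_ord lee_fin le_eqVlt; apply/orP; left; apply/eqP; ring.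
  have hW3 : (N%:R * (e / (2 * N.+1%:R)) <= e / 2)%R.
    have hN : (N.+1%:R != 0 :> R)%R by rewrite pnatr_eq0.
    rewrite -subr_ge0 (_ : (e / 2 - N%:R * (e / (2 * N.+1%:R)) = e / (2 * N.+1%:R))%R).
      exact: ltW.
    rewrite -natr1; field; by rewrite addrC natr1.
  rewrite [e in _ <= e%:E](splitr e) EFinD; apply: leeD => //.
  apply: (le_trans hW); apply: (le_trans hW2); rewrite lee_fin //.
Qed.
End Approx.

Section Itv.
Variable R : realType.
Local Notation leb := (@lebesgue_measure R).

Definition clamp (T x : R) := Num.min (Num.max x 0) T.

Definition Iv (u v T : R) : set R := `]u, v] `&` `[0, T].
Definition I0 (T : R) : set R := `[0, T].

Lemma mI (u v T : R) : measurable (Iv u v T).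
Proof. by apply: measurableI. Qed.

Lemma finI (u v T : R) : (leb (Iv u v T) < +oo)%E.
Proof.
apply: (@le_lt_trans _ _ (leb (I0 T))); first by apply: le_measure; rewrite ?inE //; [exact: mI| apply: measurable_itv | apply: subIsetr].
by rewrite /I0 lebesgue_measure_itv; case: ifP => _; rewrite ?ltry.
Qed.

Lemma measurable_rate1 (A B : R) : measurable_fun [set: R] (rate1 A B).
Proof.
apply: measurable_realfun.measurable_funD; first exact: measurable_cst.
apply: measurable_fun_ifT.
- by apply: measurable_realfun.measurable_fun_ler; [exact: measurable_cst| exact: measurable_id].
- apply: measurable_realfun.measurable_funM; first exact: measurable_cst.
  apply: measurableT_comp; first exact: measurable_realfun.measurable_expR.
  apply: measurableT_comp; first exact: measurable_realfun.oppr_measurable.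
  by apply: measurable_realfun.measurable_funB; [exact: measurable_id| exact: measurable_cst].
- exact: measurable_cst.
Qed.

Lemma rate1_bounds (A B x : R) : 0 <= A -> B <= rate1 A B x <= B + A.
Proof.
move=> A0; rewrite /rate1; case: ifP => h1; last by rewrite addr0 lexx lerDl.
rewrite lerDl lerD2l mulr_ge0 ?expR_ge0 //= -[leRHS]mulr1 ler_wpM2l //.
by rewrite expR_le1 oppr_le0 subr_ge0.
Qed.

Lemma integrable_I (u v T : R) (f : R -> R) (M : R) : measurable_fun [set: R] f ->
  (forall x, `|f x| <= M) -> leb.-integrable (Iv u v T) (EFin \o f).
Proof.
move=> mf bf; apply: measurable_bounded_integrable; first exact: mI.
- exact: finI.
- exact: measurable_funS mf.
exists M; split; first exact: num_real.
by move=> N hN x _ /=; apply: le_trans (bf x) (ltW hN).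
Qed.

Lemma int_rate0 (u v T B : R) :
  Rintegral leb (Iv u v T) (rate0 B) = B * fine (leb (Iv u v T)).
Proof. by rewrite /rate0 Rintegral_cst //; exact: mI. Qed.

Lemma int_rate1 (u v T A B : R) : 0 <= A -> 0 <= B ->
  B * fine (leb (Iv u v T)) <= Rintegral leb (Iv u v T) (rate1 A B) <=
  (B + A) * fine (leb (Iv u v T)).
Proof.
move=> A0 B0.
have i1 : leb.-integrable (Iv u v T) (EFin \o rate1 A B).
  apply: (@integrable_I _ _ _ _ (B + A)); first exact: measurable_rate1.
  move=> x; have /andP[h1 h2] := rate1_bounds B x A0.
  by rewrite ger0_norm // (le_trans B0 h1).
have ic (c : R) : leb.-integrable (Iv u v T) (EFin \o (fun _ => c)).
  by apply: (@integrable_I _ _ _ _ `|c|); [exact: measurable_cst| move=> x; exact: lexx].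
rewrite -!Rintegral_cst; try exact: mI.
apply/andP; split; apply: le_Rintegral => //; try exact: mI.
- by move=> x _; have /andP[] := rate1_bounds B x A0.
- by move=> x _; have /andP[] := rate1_bounds B x A0.
Qed.

Lemma clamp_ge0 (T x : R) : 0 <= T -> 0 <= clamp T x.
Proof. by move=> T0; rewrite /clamp le_min T0 le_max lexx orbT. Qed.
Lemma clamp_leT (T x : R) : clamp T x <= T.
Proof. by rewrite /clamp ge_min lexx orbT. Qed.
Lemma clamp_mono (T x y : R) : x <= y -> clamp T x <= clamp T y.
Proof. by move=> xy; apply: le_min2 => //; apply: le_max2. Qed.

Lemma lenI (u v T : R) : 0 <= T -> u <= v ->
  fine (leb (Iv u v T)) <= clamp T v - clamp T u.
Proof.
move=> T0 uv.
have sub : Iv u v T `<=` `[clamp T u, clamp T v].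
  move=> x [/=]; rewrite !in_itv /= => /andP[ux xv] /andP[x0 xT].
  rewrite /clamp; apply/andP; split.
    by rewrite ge_min ge_max (ltW ux) x0.
  by rewrite le_min le_max xv xT.
have := @le_measure _ _ _ leb _ _ (mem_set (mI u v T)) (mem_set (measurable_itv `[clamp T u, clamp T v])) sub.
have cuv : clamp T u <= clamp T v by apply: clamp_mono.
have h2 : (leb `[clamp T u, clamp T v] <= (clamp T v - clamp T u)%:E)%E.
  rewrite lebesgue_measure_itv /=; case: ifP => // _.
  by rewrite lee_fin subr_ge0.
move=> h1; have h3 := le_trans h1 h2.
have h0 : (0 <= leb (Iv u v T))%E by apply: measure_ge0.
rewrite -lee_fin fineK //; rewrite ge0_fin_numE //; exact: finI.
Qed.
End Itv.

Lemma in_bigU (T : Type) (I : eqType) (r : seq I) (Q : pred I) (F : I -> set T) x :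
  (\big[setU/set0]_(i <- r | Q i) F i) x <-> exists i, [/\ i \in r, Q i & F i x].
Proof.
elim: r => [|i r IH]; first by rewrite big_nil; split => // -[i []]; rewrite in_nil.
rewrite big_cons; case: ifP => Qi; split.
- case => [Fx|/IH [j [jr Qj Fj]]]; first by exists i; rewrite mem_head.
  by exists j; rewrite in_cons jr orbT.
- move=> [j [+ Qj Fj]]; rewrite in_cons => /orP[/eqP ji|jr]; first by left; rewrite -ji.
  by right; apply/IH; exists j.
- by move/IH => [j [jr Qj Fj]]; exists j; rewrite in_cons jr orbT.
- move=> [j [+ Qj Fj]]; rewrite in_cons => /orP[/eqP ji|jr]; first by rewrite -ji Qj in Qi.
  by apply/IH; exists j.
Qed.

Section ProbR.
Context d (T : measurableType d) (R : realType) (P : probability T R).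
Local Notation p A := (fine (P A)).

Lemma PE (A : set T) : measurable A -> P A = (p A)%:E.
Proof.
move=> mA; rewrite fineK // ge0_fin_numE //.
by apply: (le_lt_trans (probability_le1 P mA)); rewrite ltry.
Qed.

Lemma p_ge0 (A : set T) : 0 <= p A.
Proof. by apply: fine_ge0. Qed.

Lemma p_le1 (A : set T) : measurable A -> p A <= 1.
Proof. by move=> mA; rewrite -lee_fin -PE //; exact: probability_le1. Qed.

Lemma p_mono (A B : set T) : measurable A -> measurable B -> A `<=` B -> p A <= p B.
Proof.
move=> mA mB AB; rewrite -lee_fin -!PE //; apply: le_measure => //; by rewrite inE.
Qed.

Lemma p_U2 (A B : set T) : measurable A -> measurable B -> p (A `|` B) <= p A + p B.
Proof.
move=> mA mB; rewrite -lee_fin EFinD -!PE //; last exact: measurableU.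
exact: measureU2.
Qed.

Lemma p_C (A : set T) : measurable A -> p (~` A) = 1 - p A.
Proof.
move=> mA; apply: EFin_inj; rewrite -PE; last exact: measurableC.
by rewrite probability_setC // PE // EFinB.
Qed.

Lemma p_T : p setT = 1.
Proof. by rewrite probability_setT. Qed.

Lemma p_bigU (I : eqType) (r : seq I) (Q : pred I) (F : I -> set T) :
  uniq r -> (forall i, measurable (F i)) ->
  (forall i j, i != j -> F i `&` F j = set0) ->
  p (\big[setU/set0]_(i <- r | Q i) F i) = \sum_(i <- r | Q i) p (F i).
Proof.
move=> ur mF dF; apply: EFin_inj.
have mU (r' : seq I) : measurable (\big[setU/set0]_(i <- r' | Q i) F i).
  by apply: bigsetU_measurable => i _.
rewrite -PE // -sumEFin.
elim: r ur => [|i r IH] /=; first by rewrite !big_nil measure0.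
move=> /andP[ir ur]; rewrite !big_cons; case: ifP => Qi; last exact: IH.
rewrite measureU //; first by congr (_ + _); [exact: PE | exact: IH].
apply/seteqP; split => // x [Fix].
have : forall j, j \in r -> F i x -> ~ F j x.
  move=> j jr Fx Fjx; have ij : i != j by apply: contraNneq ir => ->.
  by have := dF _ _ ij; move/seteqP => [/(_ x) /= H _]; apply: H.
move=> H /in_bigU [j [jr Qj Fjx]]; exact: (H j jr Fix).
Qed.
End ProbR.



Section Seq.
Variable R : realType.

Definition t0 (s : seq R) : R := - 1 - \sum_(t <- s) `|t|.

Lemma sum_abs_ge (s : seq R) t : t \in s -> `|t| <= \sum_(u <- s) `|u|.
Proof.
elim: s => [//|u s IH]; rewrite in_cons big_cons => /orP[/eqP->|ts].
  by rewrite lerDl sumr_ge0.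
by rewrite (le_trans (IH ts)) // lerDr.
Qed.

Lemma t0_lt (s : seq R) t : t \in s -> t0 s < t.
Proof.
move=> ts; have h := sum_abs_ge ts; rewrite /t0.
have : - `|t| <= t by rewrite lerNl ler_normr lexx orbT.
move=> h2; lra.
Qed.

Lemma t0_neg (s : seq R) : t0 s < 0.
Proof. rewrite /t0; have : 0 <= \sum_(t <- s) `|t| by apply: sumr_ge0 => t _. lra. Qed.

Definition Ls (s : seq R) := t0 s :: sort <=%R (undup s).

Lemma Ls_sorted s : sorted <%R (Ls s).
Proof.
rewrite /Ls /= path_sortedE; last exact: lt_trans.
rewrite sort_lt_sorted undup_uniq andbT; apply/allP => t.
by rewrite mem_sort mem_undup; apply: t0_lt.
Qed.

Lemma Ls_size s : size (Ls s) = (size (undup s)).+1.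
Proof. by rewrite /= size_sort. Qed.

Definition tau (s : seq R) (i : nat) : R := nth 0 (Ls s) i.

Lemma tau0 s : tau s 0 = t0 s.
Proof. by []. Qed.

Lemma tau_lt s i j : (i < j)%N -> (j <= size (undup s))%N -> tau s i < tau s j.
Proof.
move=> ij js; apply: (sorted_ltn_nth lt_trans) => //; first exact: Ls_sorted.
- by rewrite inE Ls_size ltnS (leq_trans (ltnW ij)).
- by rewrite inE Ls_size ltnS.
Qed.

Lemma tau_cover s t : t \in s -> exists2 i, (i <= size (undup s))%N & tau s i = t.
Proof.
move=> ts; have tL : t \in Ls s by rewrite in_cons mem_sort mem_undup ts orbT.
exists (index t (Ls s)); last exact: nth_index.
by rewrite -ltnS -Ls_size index_mem.
Qed.
End Seq.

Section Cfg.
Variable R : realType.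
Local Notation X := (config R).

Lemma cyl_meas (t : R) (k : nat) : measurable [set x : X | x t = k].
Proof. by apply: sub_gen_smallest; exists t, k. Qed.

Lemma eq_meas (a b : R) (c : nat) : measurable [set x : X | x b = (x a + c)%N].
Proof.
rewrite (_ : [set x : X | _] = \bigcup_(m in [set: nat]) ([set x : X | x a = m] `&` [set x : X | x b = (m + c)%N])).
  by apply: bigcup_measurable => m _; apply: measurableI; apply: cyl_meas.
apply/seteqP; split => x /=.
  by move=> h; exists (x a).
by move=> [m _ [/= -> ->]].
Qed.

Definition Eset (tt : nat -> R) (n : nat) (k : nat -> nat) : set X :=
  [set x | forall i, (i < n)%N -> x (tt i.+1) = (x (tt i) + k i)%N].

Lemma E_meas tt n k : measurable (Eset tt n k).
Proof.
elim: n => [|n IH].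
  by rewrite (_ : Eset tt 0 k = setT) //; apply/seteqP; split => // x _ i.
rewrite (_ : Eset tt n.+1 k = Eset tt n k `&` [set x : X | x (tt n.+1) = (x (tt n) + k n)%N]).
  by apply: measurableI => //; apply: eq_meas.
apply/seteqP; split => x /=.
  by move=> h; split; [move=> i ni; apply: h; rewrite ltnS ltnW | apply: h].
move=> [h1 h2] i; rewrite ltnS leq_eqVlt => /orP[/eqP->//|]; exact: h1.
Qed.

Definition detG : set (set X) := [set S | measurable S /\
  exists s : seq R, forall x y : X, (forall t, t \in s -> x t = y t) -> S x -> S y].

Lemma detG_T : detG setT.
Proof. by split => //; exists [::]. Qed.

Lemma detG_C A : detG A -> detG (~` A).
Proof.
move=> [mA [s hs]]; split; first exact: measurableC.
exists s => x y hxy nAx Ay; apply: nAx; apply: (hs y x) => // t ts; by rewrite hxy.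
Qed.

Lemma detG_U A B : detG A -> detG (A `|` B) \/ True.
Proof. by right. Qed.

Lemma detG_U2 A B : detG A -> detG B -> detG (A `|` B).
Proof.
move=> [mA [s hs]] [mB [s' hs']]; split; first exact: measurableU.
exists (s ++ s') => x y hxy [Ax|Bx].
  by left; apply: (hs x) => // t ts; apply: hxy; rewrite mem_cat ts.
by right; apply: (hs' x) => // t ts; apply: hxy; rewrite mem_cat ts orbT.
Qed.

Lemma detG_gen : @measurable _ X = <<s detG >>.
Proof.
apply/seteqP; split.
  apply: smallest_sub; first exact: smallest_sigma_algebra.
  move=> A [t [k ->]]; apply: sub_sigma_algebra; split; first exact: cyl_meas.
  by exists [:: t] => x y hxy /=; rewrite -hxy // mem_head.
apply: smallest_sub; first exact: sigma_algebra_measurable.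
by move=> A [].
Qed.
End Cfg.

Section Main.
Variable R : realType.
Local Notation X := (config R).
Local Notation leb := (@lebesgue_measure R).

Lemma fin_dim (T A B : R) (hT : 0 <= T) (hA : 0 < A) (hB : 0 < B)
  (P0 P1 : probability X R)
  (H0 : PPP_law T (rate0 B) P0) (H1 : PPP_law T (rate1 A B) P1) (S0 : set X) (hS : detG S0)
  (c eta : R) (hc : 0 < c) (heta : 0 < eta) :
  fine (P1 S0) - fine (P0 S0) <=
    (expR (A ^+ 2 * T / B) - 1 + 2 * eta) / (2 * c) + c / 2 + eta.
Proof.
move: hS => [mS [s hs]].
set n := size (undup s).
set tt := tau s.
have tlt : forall i, (i < n)%N -> tt i < tt i.+1 by move=> i hi; apply: tau_lt.
pose ar (i : nat) := Rintegral leb (`]tt i, tt i.+1] `&` `[0, T]) (rate1 A B).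
pose br (i : nat) := Rintegral leb (`]tt i, tt i.+1] `&` `[0, T]) (rate0 B).
pose l (i : nat) := fine (leb (Iv (tt i) (tt i.+1) T)).
have l0 i : 0 <= l i by apply: fine_ge0.
have hb i : br i = B * l i by apply: int_rate0.
have ha i : B * l i <= ar i <= (B + A) * l i by apply: int_rate1; apply: ltW.
have a0 i : 0 <= ar i by have /andP[h _] := ha i; apply: le_trans h; rewrite mulr_ge0 // ltW.
have b0 i : 0 <= br i by rewrite hb mulr_ge0 // ltW.
have ba i : br i = 0 -> ar i = 0.
  rewrite hb => /eqP; rewrite mulf_eq0 gt_eqF //= => /eqP li.
  by have /andP[h1 h2] := ha i; move: h1 h2; rewrite li !mulr0 => h1 h2; apply/eqP; rewrite eq_le h1 h2.
have chi i : (ar i - br i) ^+ 2 / br i <= A ^+ 2 * l i / B.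
  have [li0|lipos] := eqVneq (l i) 0.
    by rewrite hb li0 !mulr0 invr0 !mulr0 ?mul0r.
  have lp : 0 < l i by rewrite lt_def lipos l0.
  have /andP[h1 h2] := ha i; rewrite hb.
  have d0 : 0 <= ar i - B * l i by rewrite subr_ge0.
  have d1 : ar i - B * l i <= A * l i by rewrite lerBlDl -mulrDl addrC (addrC A).
  rewrite ler_pdivrMr ?mulr_gt0 //.
  rewrite (_ : A ^+ 2 * l i / B * (B * l i) = (A * l i) ^+ 2); last by field; rewrite gt_eqF.
  by rewrite ler_sqr ?nnegrE // mulr_ge0 // ltW.
have suml : \sum_(i < n) l i <= T.
  pose f i := clamp T (tt i).
  apply: (@le_trans _ _ (\sum_(i < n) (f i.+1 - f i))).
    apply: ler_sum => i _; apply: lenI => //; exact/ltW/tlt.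
  rewrite -(big_mkord xpredT (fun i => f i.+1 - f i)) telescope_sumr // /f.
  have := clamp_ge0 (tt 0%N) hT; have := clamp_leT T (tt n); lra.
have chitot : \sum_(i < n) (ar i - br i) ^+ 2 / br i <= A ^+ 2 * T / B.
  apply: (@le_trans _ _ (\sum_(i < n) (A ^+ 2 / B) * l i)).
    by apply: ler_sum => i _; rewrite [X in _ <= X]mulrAC; exact: chi.
  rewrite -big_distrr /= [X in _ <= X]mulrAC; apply: ler_wpM2l => //; rewrite divr_ge0 ?sqr_ge0 // ltW //.
have etan : 0 < eta / n.+1%:R by rewrite divr_gt0.
have /choice [Kf hK] : forall i : 'I_n, exists K0 : nat, forall K, (K0 <= K)%N ->
    1 - \sum_(j < K) pois_pmf (ar i) j <= eta / n.+1%:R.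
  by move=> i; apply: pois_tail.
set K := \max_(i < n) Kf i.
have tail : 1 - \prod_(i < n) \sum_(j < K) pois_pmf (ar i) j <= eta.
  apply: le_trans; first apply: one_sub_prod.
    by move=> i; apply/andP; split; [apply: sumr_ge0 => j _; apply: pois_ge0|apply: pois_sum_le1].
  apply: (@le_trans _ _ (\sum_(i < n) (eta / n.+1%:R))).
    by apply: ler_sum => i _; apply: hK; apply: leq_bigmax.
  rewrite sumr_const card_ord -(mulr_natr (eta / n.+1%:R) n) -mulrA -[leRHS]mulr1 ler_pM2l //.
  by rewrite mulrC ler_pdivrMr ?ltr0n // mul1r ler_nat.
pose kn (kf : {ffun 'I_n -> 'I_K}) (i : nat) : nat :=
  oapp (fun j : 'I_n => nat_of_ord (kf j)) 0%N (insub i).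
have knE kf (j : 'I_n) : kn kf j = kf j by rewrite /kn valK.
pose a' : 'I_n -> R := fun i => ar i.
pose b' : 'I_n -> R := fun i => br i.
pose EE kf := Eset tt n (kn kf).
have mEE kf : measurable (EE kf) by apply: E_meas.
have PE1 kf : fine (P1 (EE kf)) = pj a' kf.
  rewrite /EE /Eset H1.2 //=.
  by apply: eq_bigr => i _; rewrite knE.
have PE0 kf : fine (P0 (EE kf)) = pj b' kf.
  rewrite /EE /Eset H0.2 //=.
  by apply: eq_bigr => i _; rewrite knE.
pose Z := [set x : X | x (tt 0%N) = 0%N].
have mZ : measurable Z by apply: cyl_meas.
have tt0 : tt 0%N < 0 by rewrite /tt tau0; apply: t0_neg.
have pZ1 : fine (P1 (~` Z)) = 0 by rewrite p_C // H1.1 //= subrr.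
have pZ0 : fine (P0 (~` Z)) = 0 by rewrite p_C // H0.1 //= subrr.
have disj kf kf' : kf != kf' -> EE kf `&` EE kf' = set0.
  move=> neq; apply/seteqP; split => // x [E1 E2]; apply: (negP neq).
  apply/eqP/ffunP => j; apply: val_inj => /=.
  have h1 := E1 j (ltn_ord j); have h2 := E2 j (ltn_ord j).
  rewrite h1 in h2; move/addnI: h2; by rewrite !knE.
have agree kf x y : Z x -> EE kf x -> Z y -> EE kf y ->
    forall i, (i <= n)%N -> x (tt i) = y (tt i).
  move=> Zx Ex Zy Ey; elim => [|i IH] hi; first by rewrite Zx Zy.
  by rewrite (Ex i hi) (Ey i hi) IH // ltnW.
pose WW kf := `[< Z `&` EE kf `<=` S0 >].
have hW kf x : S0 x -> Z x -> EE kf x -> WW kf.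
  move=> Sx Zx Ex; apply/asboolP => y [Zy Ey]; apply: (hs x y) => // t ts.
  by have [i hi <-] := tau_cover ts; apply: (agree kf).
pose UU := \big[setU/set0]_(kf : {ffun 'I_n -> 'I_K}) EE kf.
pose VV := \big[setU/set0]_(kf : {ffun 'I_n -> 'I_K} | WW kf) (Z `&` EE kf).
have mUU : measurable UU by apply: bigsetU_measurable => kf _.
have mVV : measurable VV by apply: bigsetU_measurable => kf _; apply: measurableI.
have cover : S0 `<=` VV `|` ~` UU `|` ~` Z.
  move=> x Sx; have [Zx|nZx] := pselect (Z x); last by right.
  left; have [Ux|nUx] := pselect (UU x); last by right.
  left; move/in_bigU: Ux => [kf [_ _ Ex]].
  apply/in_bigU; exists kf; split; [by rewrite mem_index_enum | exact: (hW kf x) | by split].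
have VVsub : VV `<=` S0.
  by move=> x /in_bigU [kf [_ /asboolP Wk Ex]]; apply: Wk.
have disjZ kf kf' : kf != kf' -> (Z `&` EE kf) `&` (Z `&` EE kf') = set0.
  move=> neq; apply/seteqP; split => // x [[_ E1] [_ E2]].
  by rewrite -(disj kf kf' neq); split.
have mZE kf : measurable (Z `&` EE kf) by apply: measurableI.
have uenum := index_enum_uniq {ffun 'I_n -> 'I_K}.
have ub1 : fine (P1 S0) <= \sum_(kf : {ffun 'I_n -> 'I_K} | WW kf) pj a' kf + (1 - \sum_(kf : {ffun 'I_n -> 'I_K}) pj a' kf).
  apply: (@le_trans _ _ (fine (P1 VV) + fine (P1 (~` UU)) + fine (P1 (~` Z)))).
    apply: (le_trans (p_mono _ mS _ cover)); first by apply: measurableU; [apply: measurableU => //; apply: measurableC| apply: measurableC].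
    apply: (le_trans (p_U2 _ _ _)); [apply: measurableU => //; exact: measurableC| exact: measurableC|].
    rewrite lerD2r; apply: p_U2 => //; exact: measurableC.
  rewrite pZ1 addr0; apply: lerD.
    rewrite /VV p_bigU //; apply: ler_sum => kf _; rewrite -PE1.
    by apply: p_mono => //; apply: subIsetr.
  by rewrite p_C // /UU p_bigU // (eq_bigr _ (fun kf _ => PE1 kf)).
have lb0 : \sum_(kf : {ffun 'I_n -> 'I_K} | WW kf) pj b' kf <= fine (P0 S0).
  apply: (le_trans _ (p_mono _ mVV mS VVsub)).
  rewrite /VV p_bigU //; apply: ler_sum => kf _; rewrite -PE0.
  have h : EE kf `<=` (Z `&` EE kf) `|` ~` Z.
    by move=> x Ex; have [Zx|nZx] := pselect (Z x); [left|right].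
  apply: (le_trans (p_mono _ (mEE kf) _ h)); first by apply: measurableU => //; exact: measurableC.
  apply: (le_trans (p_U2 _ _ _)) => //; first exact: measurableC.
  by rewrite pZ0 addr0.
have hmf := @main_fin R n K a' b' c (fun i => a0 i) (fun i => b0 i) (fun i => ba i) hc.
have bs := box_sum a' K.
set Q := \prod_(i < n) \sum_(j < K) pois_pmf (a' i) j in bs hmf.
have sW : \sum_(kf : {ffun 'I_n -> 'I_K} | WW kf) pj a' kf - \sum_(kf : {ffun 'I_n -> 'I_K} | WW kf) pj b' kf
    <= \sum_(kf : {ffun 'I_n -> 'I_K}) `|pj a' kf - pj b' kf|.
  rewrite -sumrB big_mkcond /=; apply: ler_sum => kf _.
  by case: ifP => _; [apply: ler_norm | apply: normr_ge0].
have eE : expR (\sum_(i < n) (a' i - b' i) ^+ 2 / b' i) <= expR (A ^+ 2 * T / B).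
  by rewrite ler_expR.
have tl : 1 - Q <= eta by exact: tail.
have hdiv : (expR (\sum_(i < n) (a' i - b' i) ^+ 2 / b' i) - 2 * Q + 1) / (2 * c) <=
    (expR (A ^+ 2 * T / B) - 1 + 2 * eta) / (2 * c).
  rewrite ler_pM2r; last by rewrite invr_gt0 mulr_gt0.
  lra.
rewrite bs in ub1.
move: ub1 lb0 sW hmf hdiv tl. rewrite -/Q. lra.
Qed.
End Main.

Theorem proposition2p1 (R : realType) (T : R) (hT : 1 < T) :
  forall eps : R, 0 < eps ->
  exists delta : R, 0 < delta /\
    forall A B : R, 0 < A -> 0 < B -> A / Num.sqrt B < delta ->
    forall P0 P1 : probability (config R) R,
      PPP_law T (rate0 B) P0 -> PPP_law T (rate1 A B) P1 ->
    forall psi : config R -> bool,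
      measurable (psi @^-1` [set true]) ->
      ((2^-1)%:E * (P0 (psi @^-1` [set false]) + P1 (psi @^-1` [set true]))
        <= (2^-1 + eps)%:E)%E.
Proof.
move=> eps eps0.
have T0 : 0 < T by apply: lt_trans hT.
have e2 : 0 < eps ^+ 2 / 2 by rewrite divr_gt0 // exprn_gt0.
have lnp : 0 < ln (1 + eps ^+ 2 / 2) by apply: ln_gt0; rewrite ltrDl.
exists (Num.sqrt (ln (1 + eps ^+ 2 / 2) / T)); split.
  by rewrite sqrtr_gt0 divr_gt0.
move=> A B A0 B0 hAB P0 P1 H0 H1 psi mS.
set S := psi @^-1` [set true].
have SC : psi @^-1` [set false] = ~` S.
  by apply/seteqP; split => x; rewrite /S /preimage /=; case: (psi x).
rewrite SC (PE P0 (measurableC mS)) (PE P1 mS) -EFinD -EFinM lee_fin p_C //.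
suff key : fine (P1 S) - fine (P0 S) <= 2 * eps.
  rewrite -subr_ge0; have -> : 2^-1 + eps - 2^-1 * (1 - fine (P0 S) + fine (P1 S))
     = 2^-1 * (2 * eps - (fine (P1 S) - fine (P0 S))) by field.
  by rewrite mulr_ge0 // subr_ge0.
have sB : 0 < Num.sqrt B by rewrite sqrtr_gt0.
have hM : expR (A ^+ 2 * T / B) <= 1 + eps ^+ 2 / 2.
  rewrite -[X in _ <= X]lnK; last by rewrite posrE ltr_wpDr // ltW.
  rewrite ler_expR.
  have h1 : 0 <= A / Num.sqrt B by rewrite divr_ge0 // ltW.
  have h2 : (A / Num.sqrt B) ^+ 2 < ln (1 + eps ^+ 2 / 2) / T.
    rewrite -[X in _ < X]sqr_sqrtr; last by rewrite divr_ge0 // ltW.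
    by rewrite ltr_pXn2r // ?nnegrE // sqrtr_ge0.
  rewrite exprMn exprVn sqr_sqrtr ?ltW // in h2.
  by rewrite mulrAC -ler_pdivlMr //; exact: ltW.
pose mu := measure_add P0 P1.
have mufin : (mu setT < +oo)%E.
  rewrite /mu measure_addE; apply: lte_add_pinfty.
    by apply: (le_lt_trans (probability_le1 _ _)); [exact: measurableT | exact: ltry].
  by apply: (le_lt_trans (probability_le1 _ _)); [exact: measurableT | exact: ltry].
have e8 : 0 < eps / 8 by rewrite divr_gt0.
have [S0 [GS0 hS0]] := @approx_all _ _ _ _ mu (@detG_gen R) (fun A h => h.1)
   (@detG_T R) (@detG_C R) (@detG_U2 R) mufin S mS (eps / 8) e8.
have mS0 : measurable S0 by case: GS0.
have msd : measurable (symd S S0) by apply: symd_meas.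
have hsd : fine (P0 (symd S S0)) + fine (P1 (symd S S0)) <= eps / 8.
  by rewrite -lee_fin EFinD -!PE // -measure_addE.
have u1 : fine (P1 S) <= fine (P1 S0) + fine (P1 (symd S S0)).
  have sub : S `<=` S0 `|` symd S S0.
    by move=> x Sx; have [h|h] := pselect (S0 x); [left|right; left].
  exact: (le_trans (p_mono P1 mS (measurableU _ _ mS0 msd) sub) (p_U2 P1 mS0 msd)).
have u0 : fine (P0 S0) <= fine (P0 S) + fine (P0 (symd S S0)).
  have sub : S0 `<=` S `|` symd S S0.
    by move=> x Sx; have [h|h] := pselect (S x); [left|right; right].
  exact: (le_trans (p_mono P0 mS0 (measurableU _ _ mS msd) sub) (p_U2 P0 mS msd)).
pose eta := eps ^+ 2 / (8 * (1 + eps)).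
have eta0 : 0 < eta by rewrite divr_gt0 ?exprn_gt0 // mulr_gt0 // addr_gt0.
have fd := fin_dim (ltW T0) A0 B0 H0 H1 GS0 eps0 eta0.
have eta1 : eta <= eps / 8.
  rewrite /eta ler_pdivrMr ?mulr_gt0 ?addr_gt0 //.
  rewrite (_ : eps / 8 * (8 * (1 + eps)) = eps + eps ^+ 2); last by field.
  by rewrite lerDr ltW.
have eta3 : eta <= eps ^+ 2 / 8.
  rewrite /eta ler_pdivrMr ?mulr_gt0 ?addr_gt0 //.
  rewrite (_ : eps ^+ 2 / 8 * (8 * (1 + eps)) = eps ^+ 2 + eps ^+ 3); last by field.
  by rewrite lerDl exprn_ge0 // ltW.
have eta2 : 2 * eta <= eps ^+ 2 / 2.
  have : 0 <= eps ^+ 2 by rewrite exprn_ge0 // ltW.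
  lra.
have hfrac : (expR (A ^+ 2 * T / B) - 1 + 2 * eta) / (2 * eps) <= eps / 2.
  rewrite ler_pdivrMr ?mulr_gt0 //.
  rewrite (_ : eps / 2 * (2 * eps) = eps ^+ 2); last by field.
  lra.
lra.
Qed.
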